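(* Let $r \geq 3$ be an integer and $l$ be any integer with $2l+1 \geq r$. If $q \geq 2lr^3$ is a power of an odd prime and $n = rq^2$, then \[ \mathrm{ex}_r\bigl(n, \{C_2, K_{2,t+1}\}\bigr) \geq \frac{l}{r^{3/2}}\, n^{3/2} - \frac{l}{r}\, n, \] where $t = (r-1)(2l^2 - l)$.
   Context: Let $G$ be a multigraph and $\mathcal{F}$ a hypergraph. $\mathcal{F}$ is a Berge-$G$ if there is a bijection $f: E(G) \to E(\mathcal{F})$ with $e \subseteq f(e)$ for every $e \in E(G)$. For a family $\mathcal{G}$ of multigraphs, a hypergraph $\mathcal{H}$ is $\mathcal{G}$-free if for every $G \in \mathcal{G}$, $\mathcal{H}$ contains no subhypergraph isomorphic to a Berge-$G$. $\mathrm{ex}_r(n,\mathcal{G})$ denotes the maximum number of edges in an $n$-vertex $r$-uniform $\mathcal{G}$-free hypergraph. $C_2$ is the multigraph consisting of two vertices joined by two parallel edges (so $C_2$-free means linear), and $K_{2,t+1}$ is the complete bipartite graph with parts of sizes $2$ and $t+1$. *)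

(* Defs.v *)
From mathcomp Require Import all_boot.
From Stdlib Require Import Reals.
Set Implicit Arguments. Unset Strict Implicit. Unset Printing Implicit Defensive.

(* A finite multigraph: vertex type, edge type, and the two endpoints of each
   edge (parallel edges = distinct edges with the same endpoints). *)
Record multigraph := Multigraph {
  mg_V : finType;
  mg_E : finType;
  mg_ends : mg_E -> mg_V * mg_V }.

Definition hypergraph (n : nat) := {set {set 'I_n}}.

Definition uniformb (r n : nat) (H : hypergraph n) : bool :=
  [forall e in H, #|e| == r].

Definition berge_containsb (n : nat) (H : hypergraph n) (G : multigraph) : bool :=
  [exists phi : {ffun mg_V G -> 'I_n}, exists f : {ffun mg_E G -> {set 'I_n}},
    [&& injectiveb phi, injectiveb f &
        [forall e : mg_E G,
           [&& f e \in H, phi (mg_ends e).1 \in f e & phi (mg_ends e).2 \in f e]]]].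

Definition freeb (n : nat) (fam : seq multigraph) (H : hypergraph n) : bool :=
  all (fun G => ~~ berge_containsb H G) fam.

Definition ex_r (r n : nat) (fam : seq multigraph) : nat :=
  \max_(H : hypergraph n | uniformb r H && freeb fam H) #|H|.

Definition C2 : multigraph :=
  @Multigraph 'I_2 'I_2 (fun _ => (ord0, ord_max)).

Definition K2 (m : nat) : multigraph :=
  @Multigraph ('I_2 + 'I_m)%type ('I_2 * 'I_m)%type
    (fun e => (inl e.1, inr e.2)).

Definition odd_prime_power (q : nat) : Prop :=
  exists p k : nat, prime p /\ odd p /\ (0 < k)%N /\ q = (p ^ k)%N.

(* Main.v *)
Set Warnings "-notation-overridden -ambiguous-paths".
Require Import Defs.
From mathcomp Require Import all_boot.
From Stdlib Require Import Reals.
From mathcomp Require Import all_algebra finfield.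
From mathcomp Require Import ring zify.
Import GRing.Theory.
Set Implicit Arguments. Unset Strict Implicit. Unset Printing Implicit Defensive.

Definition nbhd (T : finType) (H : {set {set T}}) (u v : T) : {set T} :=
  [set w | [&& w != u, w != v, [exists e in H, (u \in e) && (w \in e)]
         & [exists e in H, (v \in e) && (w \in e)]]].

Definition linearH (T : finType) (H : {set {set T}}) :=
  forall e1 e2 x y, e1 \in H -> e2 \in H -> x != y -> x \in e1 -> y \in e1 ->
    x \in e2 -> y \in e2 -> e1 = e2.

Lemma free_of n (H : {set {set 'I_n}}) t :
  linearH H -> (forall u v, u != v -> #|nbhd H u v| <= t) ->
  freeb [:: C2; K2 t.+1] H.
Proof.
move=> lin cod; rewrite /freeb /= andbT; apply/andP; split.
- apply/negP => /existsP [phi /existsP [f /and3P [/injectiveP injphi /injectiveP injf /forallP He]]].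
  have /and3P [h0 a0 b0] := He ord0; have /and3P [h1 a1 b1] := He ord_max.
  simpl in *.
  have neq : phi ord0 != phi ord_max by rewrite (inj_eq injphi).
  by have := lin _ _ _ _ h0 h1 neq a0 b0 a1 b1 => /injf.
- apply/negP => /existsP [phi /existsP [f /and3P [/injectiveP injphi /injectiveP injf /forallP He]]].
  set u := phi (inl ord0); set v := phi (inl ord_max).
  have uv : u != v by rewrite (inj_eq injphi).
  have Hsub : [set phi (inr b) | b : 'I_t.+1] \subset nbhd H u v.
    apply/subsetP => w /imsetP [b _ ->]; rewrite inE.
    have /and3P [h0 a0 b0] := He (ord0, b); have /and3P [h1 a1 b1] := He (ord_max, b).
    simpl in *.
    rewrite !(inj_eq injphi) /=; apply/andP; split; apply/existsP.
      by exists (f (ord0, b)); rewrite h0 a0 b0.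
    by exists (f (ord_max, b)); rewrite h1 a1 b1.
  have := subset_leq_card Hsub.
  rewrite card_imset ?card_ord; last by move=> x y /injphi [].
  by move=> Hlt; have := leq_trans Hlt (cod _ _ uv); rewrite ltnn.
Qed.

Lemma transport (V : finType) n r t (H' : {set {set V}}) :
  #|V| = n -> (forall e, e \in H' -> #|e| = r) -> linearH H' ->
  (forall u v, u != v -> #|nbhd H' u v| <= t) ->
  #|H'| <= ex_r r n [:: C2; K2 t.+1].
Proof.
move=> HV unif lin cod.
pose g := fun v : V => cast_ord HV (enum_rank v).
pose gi := fun x : 'I_n => enum_val (cast_ord (esym HV) x).
have gK : cancel g gi by move=> v; rewrite /g /gi cast_ordK enum_rankK.
have giK : cancel gi g by move=> x; rewrite /g /gi enum_valK cast_ordKV.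
have ginj := can_inj gK; have giinj := can_inj giK.
have memg : forall (e : {set V}) x, (x \in g @: e) = (gi x \in e).
  by move=> e x; rewrite -{1}(giK x) mem_imset.
pose H : {set {set 'I_n}} := [set (g @: e) | e : {set V} in H'].
have -> : #|H'| = #|H| by rewrite card_imset //; apply: imset_inj.
apply: (@leq_bigmax_cond _ (fun H : hypergraph n => uniformb r H && freeb [:: C2; K2 t.+1] H) (fun H => #|H|) H).
apply/andP; split.
  apply/forallP => e; apply/implyP => /imsetP [e' He' ->].
  by rewrite card_imset // unif.
apply: free_of.
  move=> e1 e2 x y /imsetP [e1' H1 ->] /imsetP [e2' H2 ->] xy.
  rewrite !memg => x1 y1 x2 y2.
  by rewrite (lin e1' e2' (gi x) (gi y)) // (inj_eq giinj).
move=> u v uv.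
have sub : nbhd H u v \subset g @: nbhd H' (gi u) (gi v).
  apply/subsetP => w; rewrite memg !inE !(inj_eq giinj).
  case/and4P => -> -> /existsP [e /andP [/imsetP [e' He' ->] /andP [ue we]]]
                   /existsP [f /andP [/imsetP [f' Hf' ->] /andP [vf wf]]] /=.
  apply/andP; split; apply/existsP; [exists e' | exists f'].
    by rewrite He' -!memg ue we.
  by rewrite Hf' -!memg vf wf.
apply: leq_trans (subset_leq_card sub) _.
rewrite card_imset //; apply: cod.
by rewrite (inj_eq giinj).
Qed.
Local Open Scope ring_scope.
Lemma roots_le2 (F : finFieldType) (a b c : F) :
  a != 0 -> (#|[set x | (a * x ^+ 2 + b * x + c == 0)%R]| <= 2)%nat.
Proof.
move=> a0; set A := [set x | _].
have key : forall x y, x \in A -> y \in A -> x != y -> a * (x + y) + b = 0.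
  move=> x y; rewrite !inE => /eqP hx /eqP hy xy.
  have : (x - y) * (a * (x + y) + b) = 0.
    have -> : (x - y) * (a * (x + y) + b) = (a * x ^+ 2 + b * x + c) - (a * y ^+ 2 + b * y + c) by ring.
    by rewrite hx hy subrr.
  by move/eqP; rewrite mulf_eq0 subr_eq0 (negbTE xy) /= => /eqP.
case: (pickP (mem A)) => [x xA | none]; last first.
  by rewrite (eq_card0 none).
have xA' : x \in A by [].
rewrite (cardsD1 x) xA' add1n ltnS; apply/card_le1_eqP => y z.
rewrite !in_setD1 => /andP [yx yA] /andP [zx zA].
have e1 := key _ _ xA' yA (ltac:(by rewrite eq_sym)); have e2 := key _ _ xA' zA (ltac:(by rewrite eq_sym)).
have : a * (y - z) = 0.
  have -> : a * (y - z) = (a * (x + y) + b) - (a * (x + z) + b) by ring.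
  by rewrite e1 e2 subrr.
by move/eqP; rewrite mulf_eq0 (negbTE a0) subr_eq0 => /eqP.
Qed.

Lemma roots_le1 (F : finFieldType) (a b c : F) :
  a = 0 -> (b != 0) || (c != 0) -> (#|[set x | (a * x ^+ 2 + b * x + c == 0)%R]| <= 1)%nat.
Proof.
move=> -> bc; apply/card_le1_eqP => y z; rewrite !inE !mul0r !add0r => /eqP hy /eqP hz.
have : b * (y - z) = 0.
  have -> : b * (y - z) = (b * y + c) - (b * z + c) by ring.
  by rewrite hy hz subrr.
move/eqP; rewrite mulf_eq0 subr_eq0 => /orP [/eqP b0|/eqP //].
move: bc hy; rewrite b0 eqxx /= mul0r add0r => /eqP.
by move=> c0 c0'; case: c0.
Qed.
Local Close Scope ring_scope.

Lemma arith1 R L : R <= 2*L+1 -> (R-2)*(L*(L*2)) <= (R-1)*(2*L*L - L).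
Proof.
move=> h; case: (leqP R 1) => hR.
  have -> : R - 2 = 0 by lia.
  by rewrite mul0n.
have LL : L <= 2 * L * L.
  by nia.
have e1 : L * (L * 2) = (2*L*L - L) + L by rewrite subnK // mulnC (mulnC L 2).
rewrite e1.
set N := 2*L*L - L.
have e2 : R - 1 = (R - 2) + 1 by lia.
rewrite e2 mulnDl mulnDr mul1n leq_add2l.
have h0 : R - 2 + 1 <= 2 * L by lia.
have h3 := leq_mul h0 (leqnn L).
rewrite mulnDl mul1n in h3.
rewrite /N; lia.
Qed.

Lemma card_bigcup_le (I T : finType) (A : {pred I}) (G : I -> {set T}) :
  #|\bigcup_(i in A) G i| <= \sum_(i in A) #|G i|.
Proof.
apply: (big_ind2 (fun (S : {set T}) n => #|S| <= n)) => //.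
- by rewrite cards0.
- move=> S1 n1 S2 n2 h1 h2; apply: leq_trans (leq_card_setU _ _) _.
  exact: leq_add.
Qed.

Section Constr.
Local Open Scope ring_scope.
Variable F : finFieldType.
Variable r : nat.
Variable c : 'I_r -> F.
Hypothesis cinj : injective c.
Variable Lam : {set F}.
Hypothesis Lam0 : 0 \notin Lam.
Hypothesis Lamratio : forall i j k (x y : F), i != j -> k != i -> k != j ->
  x \in Lam -> y \in Lam -> (c k - c i) * x != (c k - c j) * y.
Hypothesis two : (2%:R : F) != 0.

Definition pt (i : 'I_r) (th : F * F * F * F) : F * F :=
  let: (a, b, lam, s) := th in (a + c i * lam * s, b + c i * lam * s ^+ 2).
Definition edge th : {set 'I_r * (F * F)} := [set (i, pt i th) | i : 'I_r].
Definition Theta : {set F * F * F * F} := setX (setX [set: F * F] Lam) [set~ 0].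
Definition Hc := edge @: Theta.

Lemma mem_edge k z th : ((k, z) \in edge th) = (z == pt k th).
Proof.
apply/imsetP/eqP => [[i _ [-> ->]] // | ->]; by exists k.
Qed.

Lemma LamN0 x : x \in Lam -> x != 0.
Proof. by apply: contraTneq => ->. Qed.

Lemma cneq i j : i != j -> c i - c j != 0.
Proof. by rewrite subr_eq0 (inj_eq cinj). Qed.

Lemma key_lin i j th th' : i != j -> th \in Theta ->
  pt i th = pt i th' -> pt j th = pt j th' -> th = th'.
Proof.
case: th => [[[a b] l] s]; case: th' => [[[a' b'] l'] s'].
rewrite !in_setX !inE /= => ij /andP [lL s0] [e1 e2] [e3 e4].
have cji : c j - c i != 0 by apply: cneq; rewrite eq_sym.
have l0 := LamN0 lL.
have h1 : l * s = l' * s'.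
  apply/eqP; rewrite -subr_eq0.
  have : (c j - c i) * (l * s - l' * s') = 0.
    have -> : (c j - c i) * (l * s - l' * s') = ((a + c j * l * s) - (a' + c j * l' * s'))
        - ((a + c i * l * s) - (a' + c i * l' * s')) by ring.
    by rewrite e1 e3 !subrr.
  by move/eqP; rewrite mulf_eq0 (negbTE cji).
have h2 : l * s ^+ 2 = l' * s' ^+ 2.
  apply/eqP; rewrite -subr_eq0.
  have : (c j - c i) * (l * s ^+ 2 - l' * s' ^+ 2) = 0.
    have -> : (c j - c i) * (l * s ^+ 2 - l' * s' ^+ 2) =
        ((b + c j * l * s ^+ 2) - (b' + c j * l' * s' ^+ 2))
        - ((b + c i * l * s ^+ 2) - (b' + c i * l' * s' ^+ 2)) by ring.
    by rewrite e2 e4 !subrr.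
  by move/eqP; rewrite mulf_eq0 (negbTE cji).
have ls0 : l * s != 0 by rewrite mulf_neq0.
have ss : s = s'.
  apply: (mulfI ls0).
  transitivity (l * s ^+ 2); first by ring.
  by rewrite h2 h1; ring.
subst s'.
have ll : l = l' by apply: (mulIf s0).
subst l'.
have -> : a = a' by apply: (addIr (c i * l * s)).
have -> : b = b' by apply: (addIr (c i * l * s ^+ 2)).
by [].
Qed.


Lemma lin_Hc : linearH Hc.
Proof.
move=> e1 e2 x y /imsetP [th1 T1 ->] /imsetP [th2 T2 ->].
case: x => i p; case: y => j p' xy.
rewrite !mem_edge => /eqP h1 /eqP h2 /eqP h3 /eqP h4.
have ij : i != j.
  apply: contraNneq xy => eij; subst j; by rewrite h1 h2.
by rewrite (key_lin ij T1 (etrans (esym h1) h3) (etrans (esym h2) h4)).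
Qed.

Lemma unif_Hc e : e \in Hc -> #|e| = r.
Proof.
case/imsetP => th _ ->; rewrite card_imset ?card_ord //.
by move=> i j [].
Qed.

Lemma card_Hc : (1 < r)%nat -> #|Hc| = #|Theta|.
Proof.
move=> r1; rewrite card_in_imset // => th th' T1 _ E.
have P k : pt k th = pt k th'.
  by apply/eqP; rewrite -mem_edge -E mem_edge.
have i0 : (0 < r)%nat by apply: ltn_trans r1.
apply: (@key_lin (Ordinal i0) (Ordinal r1)) => //.
Qed.

Lemma card_Theta : #|Theta| = (#|F| * #|F| * #|Lam| * #|F|.-1)%nat.
Proof. by rewrite !cardsX cardsT card_prod cardsC1. Qed.

Definition Kset (i j : 'I_r) : {set 'I_r} := [set k | (k != i) && (k != j)].

Definition roots (i j : 'I_r) (p p' : F * F) (k : 'I_r) (x y : F) : {set F} :=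
  let A := (c k - c i) * x in let B := (c k - c j) * y in
  let d1 := p'.1 - p.1 in let d2 := p'.2 - p.2 in
  [set s | (B * B - A * B) * s ^+ 2 + (2%:R * d1 * B) * s + (d1 ^+ 2 - A * d2) == 0].

Definition Sset (i j : 'I_r) (p p' : F * F) (k : 'I_r) (x y : F) :
   {set 'I_r * (F * F)} :=
  let B := (c k - c j) * y in
  [set (k, (p'.1 + B * s, p'.2 + B * s ^+ 2)) | s in roots i j p p' k x y].

Lemma nbhd_sub i j p p' :
  nbhd Hc (i, p) (j, p') \subset
  \bigcup_(k in Kset i j) \bigcup_(x in Lam) \bigcup_(y in Lam) Sset i j p p' k x y.
Proof.
apply/subsetP => -[k z]; rewrite inE.
case/and4P => wu wv /existsP [e /andP [/imsetP [th1 T1 ->] /andP [ue we]]].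
case/existsP => f /andP [/imsetP [th2 T2 ->] /andP [vf wf]].
rewrite !mem_edge in ue we vf wf.
have ki : k != i.
  apply: contraNneq wu => eki; subst k.
  by rewrite (eqP ue) (eqP we).
have kj : k != j.
  apply: contraNneq wv => ekj; subst k.
  by rewrite (eqP vf) (eqP wf).
move: T1 T2 ue we vf wf.
case: th1 => [[[a1 b1] x] s1]; case: th2 => [[[a2 b2] y] s2].
rewrite !in_setX !inE /= => /andP [xL s10] /andP [yL s20] /eqP -> /eqP -> /eqP -> /eqP [e1 e2].
apply/bigcupP; exists k; first by rewrite inE ki kj.
apply/bigcupP; exists x => //.
apply/bigcupP; exists y => //.
have ea2 : a2 = a1 + c k * x * s1 - c k * y * s2 by rewrite e1; ring.
have eb2 : b2 = b1 + c k * x * s1 ^+ 2 - c k * y * s2 ^+ 2 by rewrite e2; ring.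
apply/imsetP; exists s2.
  rewrite inE /= ea2 eb2; apply/eqP; ring.
rewrite /= ea2 eb2; congr (_, (_, _)); ring.
Qed.

Lemma roots_bnd i j p p' k x y :
  (i, p) != (j, p') -> k \in Kset i j -> x \in Lam -> y \in Lam ->
  (#|roots i j p p' k x y| <= (if (i == j) && (x == y) then 1 else 2))%nat.
Proof.
move=> uv; rewrite inE => /andP [ki kj] xL yL.
set A := (c k - c i) * x; set B := (c k - c j) * y.
have B0 : B != 0 by rewrite mulf_neq0 ?cneq ?LamN0.
have A0 : A != 0 by rewrite mulf_neq0 ?cneq ?LamN0.
case: ifP => [/andP [/eqP eij /eqP exy] | hne].
  subst j y.
  apply: roots_le1; first by rewrite /A /B subrr.
  have pp : p != p' by apply: contraNneq uv => ->.
  clear uv; case: p p' pp => [p1 p2] [q1 q2] pp /=.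
  case: (eqVneq (q1 - p1) 0) => [d10 | d10].
    apply/orP; right; rewrite d10 expr0n /= sub0r oppr_eq0 mulf_neq0 //.
    apply: contraNneq pp => /eqP; rewrite subr_eq0 => /eqP e2.
    have e1 : q1 = p1 by apply/eqP; rewrite -subr_eq0 d10.
    by rewrite e1 e2 eqxx.
  by apply/orP; left; rewrite mulf_neq0 // mulf_neq0.
apply: roots_le2.
have -> : B * B - A * B = B * (B - A) by ring.
rewrite mulf_neq0 // subr_eq0.
case: (eqVneq i j) => [eij | nij].
  subst j; move: hne; rewrite eqxx /= => /negbT xy.
  rewrite /A /B; apply: contra xy => /eqP e.
  by apply/eqP; apply: (mulfI (cneq ki)).
by rewrite eq_sym; apply: Lamratio.
Qed.

Lemma cod_Hc u v : u != v -> (r <= 2 * #|Lam| + 1)%nat ->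
  (#|nbhd Hc u v| <= (r - 1) * (2 * #|Lam| * #|Lam| - #|Lam|))%nat.
Proof.
case: u v => [i p] [j p'] uv rl.
apply: leq_trans (subset_leq_card (nbhd_sub i j p p')) _.
apply: leq_trans (card_bigcup_le _ _) _.
apply: (@leq_trans (\sum_(k in Kset i j) \sum_(x in Lam) \sum_(y in Lam)
           (if (i == j) && (x == y) then 1 else 2))%nat).
  apply: leq_sum => k kK; apply: leq_trans (card_bigcup_le _ _) _.
  apply: leq_sum => x xL; apply: leq_trans (card_bigcup_le _ _) _.
  apply: leq_sum => y yL.
  apply: leq_trans (leq_imset_card _ _) _; exact: roots_bnd.
case: (eqVneq i j) => [eij | nij].
  subst j.
  have inner : forall x, x \in Lam ->
      (\sum_(y in Lam) (if true && (x == y) then 1 else 2) = 1 + (#|Lam| - 1) * 2)%nat.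
    move=> x xL; rewrite (big_setD1 x xL) /= !eqxx.
    rewrite (eq_bigr (fun=> 2%nat)); last first.
      by move=> y; rewrite !inE /= eq_sym => /andP [/negbTE -> _].
    by rewrite /= sum_nat_const (cardsD1 x Lam) xL add1n subn1.
  rewrite (eq_bigr (fun=> (#|Lam| * (1 + (#|Lam| - 1) * 2))%nat)); last first.
    move=> k _; rewrite (eq_bigr (fun=> (1 + (#|Lam| - 1) * 2)%nat)); last exact: inner.
    by rewrite sum_nat_const.
  rewrite sum_nat_const.
  have -> : #|Kset i i| = (r - 1)%nat.
    have -> : Kset i i = [set~ i] by apply/setP => k; rewrite !inE andbb.
    by rewrite cardsC1 card_ord subn1.
  apply: leq_mul => //; nia.
rewrite /=.
rewrite (eq_bigr (fun=> (#|Lam| * (#|Lam| * 2))%nat)); last first.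
  move=> k _; rewrite (eq_bigr (fun=> (#|Lam| * 2)%nat)); last by move=> x _; rewrite sum_nat_const.
  by rewrite sum_nat_const.
rewrite sum_nat_const.
have hK : (#|Kset i j| + 2 = r)%nat.
  rewrite -[in RHS](card_ord r) -(cardsC [set i; j]) cards2 nij addnC.
  have -> : #|Kset i j| = #|~: [set i; j]|.
    by apply: eq_card => k; rewrite !inE negb_or.
  by [].
have -> : #|Kset i j| = (r - 2)%nat by lia.
exact: arith1.
Qed.
End Constr.

Section Aux.
Local Open Scope ring_scope.

Lemma ratio_sol (F : fieldType) (a b x y : F) :
  (b != 0) -> (a * x = b * y) -> y = (x * (a / b)).
Proof. by move=> b0 e; apply: (mulfI b0); rewrite -e; field. Qed.

Lemma exists_Lam (F : finFieldType) r (c : 'I_r -> F) l q :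
  #|F| = q -> injective c -> (1 + l + l * (r * r * r) < q)%nat ->
  exists Lam : {set F}, [/\ #|Lam| = l.+1, (0 \notin Lam) &
    forall i j k (x y : F), i != j -> k != i -> k != j ->
      x \in Lam -> y \in Lam -> ((c k - c i) * x != (c k - c j) * y)].
Proof.
move=> hF cinj; elim: l => [|m IH] hq.
  pose z0 := (0 : F).
  have : (0 < #|[set~ z0]|)%nat by rewrite cardsC1 hF; lia.
  case/card_gt0P => x; rewrite !inE => x0.
  exists [set x]; split; first by rewrite cards1.
    by rewrite inE eq_sym.
  move=> i j k x1 y1 ij ki kj; rewrite !inE => /eqP -> /eqP ->.
  apply: contra ij => /eqP e; rewrite -(inj_eq cinj).
  have : (c j - c i) * x = (c k - c i) * x - (c k - c j) * x by ring.
  rewrite e subrr => /eqP.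
  by rewrite mulf_eq0 (negbTE x0) orbF subr_eq0 eq_sym.
case: IH; first lia.
move=> Lam [cL L0 Lr].
pose R := [set ((c x.2 - c x.1.2) / (c x.2 - c x.1.1)) | x : 'I_r * 'I_r * 'I_r].
pose U := Lam :|: \bigcup_(mu in Lam) [set (mu * rho) | rho in R].
pose Bad := 0 |: U.
have cR : (#|R| <= r * r * r)%nat.
  by apply: leq_trans (leq_imset_card _ _) _; rewrite !card_prod !card_ord.
have cB : (#|Bad| < q)%nat.
  apply: leq_ltn_trans (leq_card_setU _ _) _; rewrite cards1.
  apply: leq_ltn_trans (leqnn _) _.
  have h1 : (#|U| <= m.+1 + m.+1 * (r * r * r))%nat.
    apply: leq_trans (leq_card_setU _ _) _; rewrite cL leq_add2l.
    apply: leq_trans (card_bigcup_le _ _) _.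
    rewrite -cL -sum_nat_const; apply: leq_sum => mu _.
    by apply: leq_trans (leq_imset_card _ _) _.
  apply: (leq_ltn_trans (leq_add (leqnn 1) h1)); lia.
have : (0 < #|~: Bad|)%nat.
  have h := cardsC Bad; rewrite hF in h; lia.
case/card_gt0P => z; rewrite !inE negb_or => /andP [z0 /norP [zL zB]].
exists (z |: Lam); split.
- by rewrite cardsU1 zL cL.
- by rewrite !inE negb_or eq_sym z0.
move=> i j k x y ij ki kj; rewrite !inE.
have ck0 : forall a, a != k -> (c k - c a) != 0.
  by move=> a ak; rewrite subr_eq0 (inj_eq cinj) eq_sym.
have bad : forall mu a b, mu \in Lam -> k != a ->
    (c k - c a) * z = (c k - c b) * mu -> False.
  move=> mu a b muL ka e.
  have ez := ratio_sol (ck0 a (ltac:(by rewrite eq_sym))) (esym e).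
  apply: (negP zB); rewrite ez; apply/bigcupP; exists mu => //.
  apply/imsetP; exists ((c k - c b) / (c k - c a)) => //.
  by apply/imsetP; exists ((a, b), k).
case/orP => [/eqP -> | xL]; case/orP => [/eqP -> | yL].
- apply: contra ij => /eqP e; rewrite -(inj_eq cinj).
  have : (c j - c i) * z = (c k - c i) * z - (c k - c j) * z by ring.
  rewrite e subrr => /eqP.
  by rewrite mulf_eq0 (negbTE z0) orbF subr_eq0 eq_sym.
- by apply/negP => /eqP e; apply: (bad y i j yL ki e).
- by apply/negP => /eqP e; apply: (bad x j i xL kj (esym e)).
- exact: Lr.
Qed.

End Aux.

Delimit Scope R_scope with R.
From Stdlib Require Import Lra.

Lemma real_part l r q : (0 < r)%nat -> (0 < q)%nat ->
  (INR l / Rpower (INR r) (3 / 2) * Rpower (INR (r * Nat.pow q 2)%nat) (3 / 2)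
     - INR l / INR r * INR (r * Nat.pow q 2)%nat
   = INR (l * (q * q * (q - 1)))%nat)%R.
Proof.
move=> r0 q0.
have rR : (0 < INR r)%R by apply: lt_0_INR; apply/ltP.
have qR : (0 < INR q)%R by apply: lt_0_INR; apply/ltP.
have e1 : INR (r * Nat.pow q 2)%nat = (INR r * INR q ^ 2)%R.
  by rewrite -multE mult_INR pow_INR.
have q2 : (0 < INR q ^ 2)%R by apply: pow_lt.
rewrite e1 -Rpower_mult_distr //.
have e2 : Rpower (INR q ^ 2) (3 / 2) = (INR q ^ 3)%R.
  rewrite -(Rpower_pow 2) // Rpower_mult.
  rewrite (_ : (INR 2 * (3 / 2) = INR 3)%R); last by simpl; lra.
  by rewrite Rpower_pow.
rewrite e2.
have e3 : INR (l * (q * q * (q - 1)))%nat = (INR l * (INR q * INR q * (INR q - 1)))%R.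
  rewrite -!multE -minusE !mult_INR minus_INR; last by apply/leP.
  by simpl.
rewrite e3.
have P : Rpower (INR r) (3 / 2) <> 0%R.
  by rewrite /Rpower; apply: Rgt_not_eq; apply: exp_pos.
have rn : INR r <> 0%R by lra.
rewrite /Rdiv !Rmult_assoc -(Rmult_assoc (/ _)) Rinv_l // Rmult_1_l.
rewrite -(Rmult_assoc (/ INR r)) Rinv_l // Rmult_1_l.
simpl; lra.
Qed.

Lemma expn_pow a b : expn a b = Nat.pow a b.
Proof. by elim: b => // b IH; rewrite expnS IH. Qed.

Section Aux2.
Local Open Scope ring_scope.
Lemma two_neq0 (F : finFieldType) p : prime p -> odd p -> p \in [pchar F] ->
  (2%:R : F) != 0.
Proof.
move=> pp po pF; rewrite -(dvdn_pcharf pF); apply/negP => d2.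
have := dvdn_leq (isT : (0 < 2)%nat) d2.
move: po; case: p pp pF d2 => [|[|[|p]]] //.
Qed.
Definition zF (F : finFieldType) : F := 0.
End Aux2.

Lemma construct r l q : (3 <= r)%nat -> (r <= 2 * l + 1)%nat -> odd_prime_power q ->
  (2 * l * (r * r * r) <= q)%nat ->
  (l * (q * q * (q - 1)) <= ex_r r (r * (q * q)) [:: C2; K2 ((r - 1) * (2 * l * l - l)).+1])%nat.
Proof.
move=> r3 rl [p [k [pp [po [k0 eq]]]]] hq.
case: (pPrimePowerField pp k0) => F pF cF.
have hF : #|F| = q by rewrite cF eq expn_pow.
have two := two_neq0 pp po pF.
have l1 : (1 <= l)%nat by lia.
have rq : (r <= #|F|)%nat.
  rewrite hF; apply: leq_trans hq.
  have h1 : (r <= r * r * r)%nat by rewrite -mulnA leq_pmulr // muln_gt0; lia.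
  by apply: leq_trans h1 _; rewrite -mulnA leq_pmull //; lia.
pose c := fun i : 'I_r => nth (zF F) (enum F) i.
have cinj : injective c.
  move=> i j /eqP; rewrite /c nth_uniq ?enum_uniq //.
  - by move/eqP/val_inj.
  - by rewrite -cardE; apply: leq_trans (ltn_ord i) rq.
  - by rewrite -cardE; apply: leq_trans (ltn_ord j) rq.
have hL : (1 + l.-1 + l.-1 * (r * r * r) < q)%nat.
  have hR : (2 <= r * r * r)%nat by nia.
  move: hR hq; generalize (r * r * r) => R hR hq.
  case: l rl l1 hq => // l' _ _ hq /=.
  have h1 : (l' <= l' * R)%nat by rewrite leq_pmulr //; lia.
  have h2 : (2 * l'.+1 * R = l' * R + l' * R + 2 * R)%nat by ring.
  lia.
have [Lam [cL L0 Lr]] := exists_Lam hF cinj hL.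
rewrite prednK // in cL.
have HV : #|{: 'I_r * (F * F)}| = (r * (q * q))%nat.
  by rewrite !card_prod card_ord hF.
have := transport (t := ((r - 1) * (2 * l * l - l))%nat) HV (@unif_Hc F r c Lam)
   (lin_Hc cinj L0) _.
rewrite card_Hc // ?card_Theta; last by lia.
rewrite hF cL.
have -> : (q * q * l * q.-1 = l * (q * q * (q - 1)))%nat.
  rewrite -subn1; ring.
apply.
move=> u v uv; rewrite -cL.
by apply: cod_Hc => //; rewrite cL.
Qed.

Theorem theorem1p4 (r l q n : nat) :
  (3 <= r)%N -> (r <= 2 * l + 1)%N ->
  odd_prime_power q -> (2 * l * r ^ 3 <= q)%N ->
  n = (r * q ^ 2)%N ->
  let t := ((r - 1) * (2 * l ^ 2 - l))%N in
  (INR l / Rpower (INR r) (3 / 2) * Rpower (INR n) (3 / 2)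
     - INR l / INR r * INR n <= INR (ex_r r n [:: C2; K2 t.+1]))%R.
Proof.
move=> r3 rl hopp hq en t.
have e2 : forall x, Nat.pow x 2 = (x * x)%nat.
  by move=> x; rewrite -expn_pow mulnn.
have e3 : forall x, Nat.pow x 3 = (x * x * x)%nat.
  by move=> x; rewrite -expn_pow expnS mulnn mulnA.
rewrite e3 in hq.
have hC := construct r3 rl hopp hq.
have q0 : (0 < q)%nat.
  have l1 : (0 < l)%nat by lia.
  have r0 : (0 < r)%nat by lia.
  by apply: leq_trans hq; rewrite !muln_gt0 l1 r0.
subst n; rewrite /t (e2 l) mulnA real_part //; last by lia.
rewrite (e2 q); apply: le_INR; apply/leP; exact: hC.
Qed.
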